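(* Let $\alpha$ be a badly approximable real number, i.e. $\inf_{q\ge1} q\,\|q\alpha\|>0$, and let $a$ be a real number with $0<a<1$. There exists a constant $C(\alpha)>0$ (depending on $\alpha$ and $a$) such that for every integer $q\ge2$, $$\sum_{x=q}^{q^3}\frac{1}{\|\alpha x\|\,x\,\bigl(\log(1/\|x\alpha\|)\bigr)^a\,(\log x)^{2-a}}\le C(\alpha).$$
   Context: For a real number $x$, $\|x\|$ denotes the distance from $x$ to the nearest integer. *)

(* Defs.v *)
From Stdlib Require Import Reals.
Open Scope R_scope.

(* floor x = up x - 1, since x < up x <= x + 1 *)
Definition rfloor (x : R) : R := IZR (up x) - 1.

Definition dnint (x : R) : R := Rmin (x - rfloor x) (rfloor x + 1 - x).

Definition badly_approximable (alpha : R) : Prop :=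
  exists c : R, 0 < c /\
    forall q : nat, (1 <= q)%nat -> c <= INR q * dnint (INR q * alpha).

Definition lemma3_term (alpha a : R) (x : nat) : R :=
  / (dnint (alpha * INR x) * INR x
     * Rpower (ln (/ dnint (INR x * alpha))) a
     * Rpower (ln (INR x)) (2 - a)).

(* Main.v *)
Require Import Defs.
From Stdlib Require Import Reals Lra Lia List ZArith Psatz.
Open Scope R_scope.

Lemma my_ln_le x y : 0 < x -> x <= y -> ln x <= ln y.
Proof. intros Hx Hxy. destruct (Rle_lt_or_eq_dec _ _ Hxy) as [H|H].
- left. now apply ln_increasing.
- subst; lra. Qed.

Lemma my_exp_le x y : x <= y -> exp x <= exp y.
Proof. intros H. destruct (Rle_lt_or_eq_dec _ _ H) as [H1|H1].
- left; now apply exp_increasing.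
- subst; lra. Qed.

Lemma ln_le_sub1 z : 0 < z -> ln z <= z - 1.
Proof. intros Hz. pose proof (exp_ineq1_le (ln z)). rewrite exp_ln in H; lra. Qed.

Lemma young x y t : 0 < x -> 0 < y -> 0 <= t <= 1 ->
  Rpower x t * Rpower y (1 - t) <= t * x + (1 - t) * y.
Proof.
  intros Hx Hy Ht. set (A := t * x + (1 - t) * y).
  assert (HA : 0 < A) by (unfold A; nra).
  unfold Rpower. rewrite <- exp_plus.
  rewrite <- (exp_ln A HA). apply my_exp_le.
  assert (E1 : ln x = ln A + ln (x / A)).
  { rewrite <- ln_mult; try lra. f_equal. field. lra. apply Rdiv_lt_0_compat; lra. }
  assert (E2 : ln y = ln A + ln (y / A)).
  { rewrite <- ln_mult; try lra. f_equal. field. lra. apply Rdiv_lt_0_compat; lra. }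
  pose proof (ln_le_sub1 (x / A) ltac:(apply Rdiv_lt_0_compat; lra)).
  pose proof (ln_le_sub1 (y / A) ltac:(apply Rdiv_lt_0_compat; lra)).
  assert (E3 : t * (x / A - 1) + (1 - t) * (y / A - 1) = 0).
  { unfold A. field. fold A; lra. }
  rewrite E1, E2. nra.
Qed.

Fixpoint lsum {A} (f : A -> R) (l : list A) : R :=
  match l with nil => 0 | x :: l' => f x + lsum f l' end.

Lemma lsum_app {A} (f : A -> R) l1 l2 : lsum f (l1 ++ l2) = lsum f l1 + lsum f l2.
Proof. induction l1; simpl; lra. Qed.

Lemma lsum_le {A} (f g : A -> R) l : (forall x, In x l -> f x <= g x) -> lsum f l <= lsum g l.
Proof. induction l; simpl; intros H; [lra|].
  pose proof (H a (or_introl eq_refl)). pose proof (IHl (fun x Hx => H x (or_intror Hx))). lra. Qed.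

Lemma lsum_scal {A} (c : R) (f : A -> R) l : lsum (fun x => c * f x) l = c * lsum f l.
Proof. induction l; simpl; [ring|]. rewrite IHl; ring. Qed.

Lemma lsum_const {A} (c : R) (l : list A) : lsum (fun _ => c) l = INR (length l) * c.
Proof. induction l; cbn [lsum length]; [simpl; ring|]. rewrite S_INR, IHl. ring. Qed.

Lemma lsum_flat_map {A B} (f : B -> R) (g : A -> list B) l :
  lsum f (flat_map g l) = lsum (fun k => lsum f (g k)) l.
Proof. induction l; simpl; [reflexivity|]. rewrite lsum_app, IHl. reflexivity. Qed.

Lemma lsum_map {A B} (f : B -> R) (g : A -> B) l : lsum f (map g l) = lsum (fun x => f (g x)) l.
Proof. induction l; simpl; [reflexivity|]. rewrite IHl; reflexivity. Qed.

Lemma lsum_sum_f_R0 (f : nat -> R) s n :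
  sum_f_R0 (fun x => f (x + s)%nat) n = lsum f (seq s (S n)).
Proof. induction n.
- simpl. replace (0 + s)%nat with s by lia. ring.
- rewrite seq_S, lsum_app. change (sum_f_R0 ?g (S n)) with (sum_f_R0 g n + g (S n)). rewrite IHn. cbn [lsum].
  replace (S n + s)%nat with (s + S n)%nat by lia. ring.
Qed.

Lemma inner_sum (a : R) (Ha0 : 0 < a) (Ha1 : a < 1) n : (1 <= n)%nat ->
  lsum (fun i => / Rpower (INR i) a) (seq 1 n) <= Rpower (INR n) (1 - a) / (1 - a).
Proof.
  intros Hn. induction n as [|n IH]; [lia|].
  destruct (Nat.eq_dec n 0) as [->|Hn0].
  - simpl. unfold Rpower. rewrite ln_1, !Rmult_0_r, exp_0.
    replace (/1 + 0) with 1 by field. apply Rmult_le_reg_r with (1 - a); [lra|].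
    unfold Rdiv. rewrite Rmult_assoc, Rinv_l by lra. lra.
  - rewrite seq_S, lsum_app. cbn [lsum].
    assert (IH' := IH ltac:(lia)).
    replace (1 + n)%nat with (S n) by lia.
    rewrite S_INR.
    assert (Hnp : 0 < INR n) by (apply lt_0_INR; lia).
    set (P := Rpower (INR n + 1) a). set (Q := Rpower (INR n) (1 - a)).
    assert (HP : 0 < P) by (unfold P, Rpower; apply exp_pos).
    assert (HQ : 0 < Q) by (unfold Q, Rpower; apply exp_pos).
    assert (PQ : P * Q <= INR n + a).
    { pose proof (young (INR n + 1) (INR n) a ltac:(lra) Hnp ltac:(lra)). fold P Q in H. lra. }
    assert (ER : Rpower (INR n + 1) (1 - a) = (INR n + 1) / P).
    { unfold P. apply Rmult_eq_reg_r with (Rpower (INR n + 1) a).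
      2: { unfold Rpower; apply Rgt_not_eq, exp_pos. }
      rewrite <- Rpower_plus. replace (1 - a + a) with 1 by ring. rewrite Rpower_1 by lra.
      field. apply Rgt_not_eq, exp_pos. }
    rewrite ER. fold Q in IH'.
    assert (H1 : / P <= ((INR n + 1) / P - Q) / (1 - a)).
    { replace (((INR n + 1) / P - Q) / (1 - a)) with ((INR n + 1 - Q * P) * / (P * (1 - a))) by (field; lra).
      replace (/ P) with ((1 - a) * / (P * (1 - a))) by (field; lra).
      apply Rmult_le_compat_r; [left; apply Rinv_0_lt_compat; nra | lra]. }
    assert (E : ((INR n + 1) / P - Q) / (1 - a) = (INR n + 1) / P / (1 - a) - Q / (1 - a)) by (field; lra).
    fold P. lra.
Qed.

Lemma rfloor_spec z : rfloor z <= z < rfloor z + 1.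
Proof. unfold rfloor. destruct (archimed z). lra. Qed.

Lemma rfloor_int z : rfloor z = IZR (up z - 1).
Proof. unfold rfloor. rewrite minus_IZR. reflexivity. Qed.

Definition frac (z : R) := z - rfloor z.

Lemma frac_spec z : 0 <= frac z < 1.
Proof. unfold frac. pose proof (rfloor_spec z). lra. Qed.

Lemma dnint_frac z : dnint z = Rmin (frac z) (1 - frac z).
Proof. unfold dnint, frac. f_equal. ring. Qed.

Lemma dnint_nonneg z : 0 <= dnint z.
Proof. rewrite dnint_frac. pose proof (frac_spec z). apply Rmin_glb; lra. Qed.

Lemma dnint_half z : dnint z <= 1/2.
Proof. rewrite dnint_frac. destruct (Rle_dec (frac z) (1/2)).
- eapply Rle_trans; [apply Rmin_l|lra].
- eapply Rle_trans; [apply Rmin_r|lra]. Qed.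

Lemma dnint_le_int z (n : Z) : dnint z <= Rabs (z - IZR n).
Proof.
  unfold dnint. pose proof (rfloor_spec z). rewrite rfloor_int in *.
  destruct (Z_le_gt_dec n (up z - 1)) as [Hn|Hn].
  - apply IZR_le in Hn. eapply Rle_trans; [apply Rmin_l|].
    rewrite Rabs_right; lra.
  - assert (Hn' : (up z - 1 + 1 <= n)%Z) by lia. apply IZR_le in Hn'. rewrite plus_IZR in Hn'.
    eapply Rle_trans; [apply Rmin_r|].
    rewrite Rabs_left1; lra.
Qed.

Definition nfl (r : R) : nat := Z.to_nat (up r - 1).

Lemma nfl_spec r : 0 <= r -> INR (nfl r) <= r < INR (nfl r) + 1.
Proof.
  intros Hr. unfold nfl. destruct (archimed r) as [H1 H2].
  assert (Hz : (0 < up r)%Z) by (apply lt_IZR; lra).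
  rewrite INR_IZR_INZ, Z2Nat.id by lia. rewrite minus_IZR. simpl. lra.
Qed.

Lemma pow2_gt n : INR n + 1 <= 2 ^ n.
Proof. induction n; [simpl; lra|]. rewrite S_INR. simpl.
  assert (1 <= 2 ^ n) by (apply pow_R1_Rle; lra). lra. Qed.

Lemma exists_m c : 0 < c -> exists m : nat, / 2 ^ m <= c.
Proof.
  intros Hc. exists (nfl (/ c)). pose proof (nfl_spec (/ c) ltac:(left; apply Rinv_0_lt_compat; lra)).
  pose proof (pow2_gt (nfl (/ c))).
  set (N := nfl (/ c)) in *.
  replace c with (/ / c) by (field; lra). apply Rinv_le_contravar.
  - apply Rinv_0_lt_compat; lra.
  - lra.
Qed.

Lemma nodup_map_inj (h : nat -> nat) (F : list nat) :
  NoDup F -> (forall x y, In x F -> In y F -> h x = h y -> x = y) -> NoDup (map h F).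
Proof.
  induction F as [|x F IH]; intros ND Hinj; simpl; [constructor|].
  inversion ND; subst. constructor.
  - intros Hin. apply in_map_iff in Hin as [y [Hy Hy']].
    assert (y = x) by (apply Hinj; simpl; auto). subst; contradiction.
  - apply IH; auto. intros; apply Hinj; simpl; auto.
Qed.

Lemma pigeon (h : nat -> nat) (F : list nat) (n : nat) :
  NoDup F -> (forall x y, In x F -> In y F -> h x = h y -> x = y) ->
  (forall x, In x F -> (h x < n)%nat) -> (length F <= n)%nat.
Proof.
  intros ND Hinj Hb. rewrite <- (length_map h F), <- (length_seq n 0).
  apply NoDup_incl_length; [apply nodup_map_inj; auto|].
  intros z Hz. apply in_map_iff in Hz as [x [<- Hx]]. apply in_seq. specialize (Hb x Hx). lia.
Qed.

Definition dd alpha x := dnint (INR x * alpha).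
Definition side alpha x := if Rle_dec (frac (INR x * alpha)) (1/2) then 0%nat else 1%nat.

Lemma side_le alpha x : (side alpha x <= 1)%nat.
Proof. unfold side. destruct Rle_dec; lia. Qed.

Lemma dd_side alpha x : dd alpha x =
  if Rle_dec (frac (INR x * alpha)) (1/2) then frac (INR x * alpha) else 1 - frac (INR x * alpha).
Proof. unfold dd. rewrite dnint_frac. destruct Rle_dec.
- apply Rmin_left. lra.
- apply Rmin_right. lra. Qed.

Lemma INR_pow2 n : INR (2 ^ n) = 2 ^ n.
Proof. rewrite pow_INR. reflexivity. Qed.

Lemma sep alpha m k x y :
  (forall q, (1 <= q)%nat -> / 2 ^ m <= INR q * dnint (INR q * alpha)) ->
  (x < y)%nat -> (2 ^ k <= x)%nat -> (y < 2 ^ S k)%nat -> side alpha x = side alpha y ->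
  / 2 ^ (k + m) <= Rabs (dd alpha x - dd alpha y).
Proof.
  intros HB Hxy Hx Hy Hs.
  set (D := dnint (INR (y - x) * alpha)).
  assert (HD : / 2 ^ (k + m) <= D).
  { pose proof (HB (y - x)%nat ltac:(lia)) as H. fold D in H.
    assert (Hyx : INR (y - x) <= 2 ^ k).
    { rewrite <- INR_pow2. apply le_INR. simpl in Hy. lia. }
    assert (HD0 : 0 <= D) by apply dnint_nonneg.
    assert (H2 : / 2 ^ m <= 2 ^ k * D) by nra.
    rewrite pow_add, Rinv_mult.
    assert (Hk : 0 < 2 ^ k) by (apply pow_lt; lra).
    apply Rmult_le_reg_l with (2 ^ k); [lra|].
    rewrite <- Rmult_assoc, Rinv_r by lra. lra. }
  eapply Rle_trans; [apply HD|]. unfold D.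
  eapply Rle_trans; [apply (dnint_le_int _ (up (INR y * alpha) - 1 - (up (INR x * alpha) - 1)))|].
  rewrite minus_IZR, <- !rfloor_int, minus_INR by lia.
  replace ((INR y - INR x) * alpha - (rfloor (INR y * alpha) - rfloor (INR x * alpha)))
    with (frac (INR y * alpha) - frac (INR x * alpha)) by (unfold frac; ring).
  rewrite !dd_side. unfold side in Hs.
  destruct (Rle_dec (frac (INR x * alpha)) (1/2)); destruct (Rle_dec (frac (INR y * alpha)) (1/2));
    try discriminate.
  - rewrite Rabs_minus_sym. lra.
  - replace (1 - frac (INR x * alpha) - (1 - frac (INR y * alpha))) with
      (frac (INR y * alpha) - frac (INR x * alpha)) by ring. lra.
Qed.

Lemma count_bound alpha m k i (F : list nat) :
  (forall q, (1 <= q)%nat -> / 2 ^ m <= INR q * dnint (INR q * alpha)) ->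
  (i <= k + m)%nat -> NoDup F ->
  (forall x, In x F -> (2 ^ k <= x)%nat /\ (x < 2 ^ S k)%nat /\ dd alpha x <= / 2 ^ i) ->
  (length F <= 2 * (2 ^ (k + m - i) + 1))%nat.
Proof.
  intros HB Hi ND HF.
  set (M := 2 ^ (k + m)).
  assert (HM : 0 < M) by (apply pow_lt; lra).
  apply pigeon with (h := fun x => (2 * nfl (dd alpha x * M) + side alpha x)%nat); auto.
  - intros x y Hx Hy Hh.
    assert (Hn : nfl (dd alpha x * M) = nfl (dd alpha y * M) /\ side alpha x = side alpha y).
    { pose proof (side_le alpha x); pose proof (side_le alpha y). lia. }
    destruct Hn as [Hn Hs].
    destruct (lt_eq_lt_dec x y) as [[Hlt|Heq]|Hgt]; auto; exfalso.
    + pose proof (HF x Hx); pose proof (HF y Hy).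
      pose proof (sep alpha m k x y HB Hlt ltac:(tauto) ltac:(tauto) Hs) as S.
      pose proof (nfl_spec (dd alpha x * M) ltac:(apply Rmult_le_pos; [apply dnint_nonneg|lra])).
      pose proof (nfl_spec (dd alpha y * M) ltac:(apply Rmult_le_pos; [apply dnint_nonneg|lra])).
      rewrite Hn in *. fold M in S.
      assert (Rabs (dd alpha x * M - dd alpha y * M) < 1) by (apply Rabs_def1; lra).
      rewrite <- Rmult_minus_distr_r, Rabs_mult, (Rabs_right M) in H3 by lra.
      assert (Rabs (dd alpha x - dd alpha y) * M >= 1).
      { apply Rle_ge. apply Rmult_le_reg_r with (/ M). apply Rinv_0_lt_compat; lra.
        rewrite Rmult_assoc, Rinv_r, Rmult_1_r, Rmult_1_l by lra. exact S. }
      lra.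
    + pose proof (HF x Hx); pose proof (HF y Hy).
      pose proof (sep alpha m k y x HB Hgt ltac:(tauto) ltac:(tauto) (eq_sym Hs)) as S.
      pose proof (nfl_spec (dd alpha x * M) ltac:(apply Rmult_le_pos; [apply dnint_nonneg|lra])).
      pose proof (nfl_spec (dd alpha y * M) ltac:(apply Rmult_le_pos; [apply dnint_nonneg|lra])).
      rewrite Hn in *. fold M in S.
      assert (Rabs (dd alpha y * M - dd alpha x * M) < 1) by (apply Rabs_def1; lra).
      rewrite <- Rmult_minus_distr_r, Rabs_mult, (Rabs_right M) in H3 by lra.
      assert (Rabs (dd alpha y - dd alpha x) * M >= 1).
      { apply Rle_ge. apply Rmult_le_reg_r with (/ M). apply Rinv_0_lt_compat; lra.
        rewrite Rmult_assoc, Rinv_r, Rmult_1_r, Rmult_1_l by lra. exact S. }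
      lra.
  - intros x Hx. destruct (HF x Hx) as [_ [_ Hd]].
    pose proof (nfl_spec (dd alpha x * M) ltac:(apply Rmult_le_pos; [apply dnint_nonneg|lra])) as [H1 _].
    assert (Hle : (nfl (dd alpha x * M) <= 2 ^ (k + m - i))%nat).
    { apply INR_le. rewrite INR_pow2. eapply Rle_trans; [apply H1|].
      unfold M. replace (k + m)%nat with (k + m - i + i)%nat at 1 by lia. rewrite pow_add.
      assert (0 < 2 ^ (k + m - i)) by (apply pow_lt; lra).
      assert (0 < 2 ^ i) by (apply pow_lt; lra).
      replace (2 ^ (k + m - i)) with (/ 2 ^ i * (2 ^ (k + m - i) * 2 ^ i)) at 2 by (field; lra).
      apply Rmult_le_compat_r; [nra|exact Hd]. }
    pose proof (side_le alpha x). lia.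
Qed.

Definition lev alpha x := Nat.log2 (nfl (/ dd alpha x)).

Lemma xfacts alpha m x :
  (forall q, (1 <= q)%nat -> / 2 ^ m <= INR q * dnint (INR q * alpha)) ->
  (2 <= x)%nat ->
  0 < dd alpha x /\ / 2 ^ S (lev alpha x) < dd alpha x /\ dd alpha x <= / 2 ^ lev alpha x /\
  (1 <= lev alpha x)%nat /\ (lev alpha x <= Nat.log2 x + m)%nat.
Proof.
  intros HB Hx.
  pose proof (HB x ltac:(lia)) as H. fold (dd alpha x) in H.
  assert (Hxp : 0 < INR x) by (apply lt_0_INR; lia).
  assert (Hm : 0 < / 2 ^ m) by (apply Rinv_0_lt_compat, pow_lt; lra).
  assert (Hd : 0 < dd alpha x).
  { destruct (Rlt_or_le 0 (dd alpha x)) as [h|h]; auto. nra. }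
  assert (Hh : dd alpha x <= 1/2) by apply dnint_half.
  set (u := / dd alpha x) in *.
  assert (Hu : 2 <= u).
  { unfold u. replace 2 with (/ (1/2)) by field. apply Rinv_le_contravar; lra. }
  pose proof (nfl_spec u ltac:(lra)) as [N1 N2].
  set (n := nfl u) in *.
  assert (Hn : (1 < n)%nat) by (apply INR_lt; simpl; lra).
  unfold lev. fold u. fold n.
  pose proof (Nat.log2_spec n ltac:(lia)) as [L1 L2].
  set (i := Nat.log2 n) in *.
  assert (R1 : 2 ^ i <= u).
  { eapply Rle_trans; [|apply N1]. rewrite <- INR_pow2. apply le_INR; lia. }
  assert (R2 : u < 2 ^ S i).
  { eapply Rlt_le_trans; [apply N2|]. rewrite <- INR_pow2, <- S_INR. apply le_INR; lia. }
  assert (Hdu : dd alpha x = / u) by (unfold u; field; lra).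
  assert (Hi0 : 0 < 2 ^ i) by (apply pow_lt; lra).
  split; [exact Hd|]. split.
  { rewrite Hdu. apply Rinv_lt_contravar; [apply Rmult_lt_0_compat; lra|lra]. }
  split.
  { rewrite Hdu. apply Rinv_le_contravar; lra. }
  split.
  { apply Nat.log2_pos; lia. }
  pose proof (Nat.log2_spec x ltac:(lia)) as [K1 K2].
  set (k := Nat.log2 x) in *.
  assert (Hux : u <= INR x * 2 ^ m).
  { unfold u. assert (0 < 2 ^ m) by (apply pow_lt; lra).
    replace (INR x * 2 ^ m) with (/ (/ 2 ^ m / INR x)) by (field; lra).
    apply Rinv_le_contravar. apply Rdiv_lt_0_compat; lra.
    apply Rmult_le_reg_r with (INR x); [lra|]. unfold Rdiv. rewrite Rmult_assoc, Rinv_l by lra. lra. }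
  assert (Hxk : INR x < 2 ^ S k) by (rewrite <- INR_pow2; apply lt_INR; lia).
  assert (2 ^ i < 2 ^ (S k + m)).
  { rewrite pow_add. assert (0 < 2 ^ m) by (apply pow_lt; lra). nra. }
  assert (Hnat : (2 ^ i < 2 ^ (S k + m))%nat) by (apply INR_lt; rewrite !INR_pow2; lra).
  apply Nat.pow_lt_mono_r_iff in Hnat; lia.
Qed.

Definition Bf a k i := / (/ 2 ^ S i * 2 ^ k * Rpower (INR i * ln 2) a * Rpower (INR k * ln 2) (2 - a)).

Lemma ln2_pos : 0 < ln 2.
Proof. pose proof ln_lt_2. lra. Qed.

Lemma Rpower_pos x y : 0 < Rpower x y.
Proof. unfold Rpower; apply exp_pos. Qed.

Lemma term_bound alpha a m x :
  (forall q, (1 <= q)%nat -> / 2 ^ m <= INR q * dnint (INR q * alpha)) ->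
  0 < a -> a < 1 -> (2 <= x)%nat ->
  0 < lemma3_term alpha a x /\
  lemma3_term alpha a x <= Bf a (Nat.log2 x) (lev alpha x).
Proof.
  intros HB Ha0 Ha1 Hx.
  destruct (xfacts alpha m x HB Hx) as [Hd [Hd1 [Hd2 [Hi1 Hi2]]]].
  unfold lemma3_term, Bf. rewrite (Rmult_comm alpha). fold (dd alpha x).
  set (i := lev alpha x) in *. set (k := Nat.log2 x).
  pose proof (Nat.log2_spec x ltac:(lia)) as [K1 K2]. fold k in K1, K2.
  assert (Hk1 : (1 <= k)%nat) by (apply Nat.log2_pos; lia).
  assert (Hxp : 0 < INR x) by (apply lt_0_INR; lia).
  pose proof ln2_pos.
  assert (Hip : 0 < INR i * ln 2) by (apply Rmult_lt_0_compat; [apply lt_0_INR; lia|lra]).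
  assert (Hkp : 0 < INR k * ln 2) by (apply Rmult_lt_0_compat; [apply lt_0_INR; lia|lra]).
  assert (Hlu : INR i * ln 2 <= ln (/ dd alpha x)).
  { rewrite <- ln_pow by lra. apply my_ln_le. apply pow_lt; lra.
    replace (2 ^ i) with (/ / 2 ^ i) by (field; apply pow_nonzero; lra).
    apply Rinv_le_contravar; auto. }
  assert (Hlx : INR k * ln 2 <= ln (INR x)).
  { rewrite <- ln_pow by lra. apply my_ln_le. apply pow_lt; lra.
    rewrite <- INR_pow2. apply le_INR; lia. }
  assert (P1 : Rpower (INR i * ln 2) a <= Rpower (ln (/ dd alpha x)) a)
    by (apply Rle_Rpower_l; lra).
  assert (P2 : Rpower (INR k * ln 2) (2 - a) <= Rpower (ln (INR x)) (2 - a))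
    by (apply Rle_Rpower_l; lra).
  assert (H2k : 2 ^ k <= INR x) by (rewrite <- INR_pow2; apply le_INR; lia).
  pose proof (Rpower_pos (INR i * ln 2) a). pose proof (Rpower_pos (INR k * ln 2) (2 - a)).
  assert (0 < / 2 ^ S i) by (apply Rinv_0_lt_compat, pow_lt; lra).
  assert (0 < 2 ^ k) by (apply pow_lt; lra).
  assert (Lp : 0 < / 2 ^ S i * 2 ^ k * Rpower (INR i * ln 2) a * Rpower (INR k * ln 2) (2 - a)).
  { repeat apply Rmult_lt_0_compat; lra. }
  assert (Le : / 2 ^ S i * 2 ^ k * Rpower (INR i * ln 2) a * Rpower (INR k * ln 2) (2 - a) <=
     dd alpha x * INR x * Rpower (ln (/ dd alpha x)) a * Rpower (ln (INR x)) (2 - a)).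
  { apply Rmult_le_compat; try lra. 
    - repeat apply Rmult_le_pos; lra.
    - apply Rmult_le_compat; try lra. repeat apply Rmult_le_pos; lra.
      apply Rmult_le_compat; lra. }
  split.
  - apply Rinv_0_lt_compat. lra.
  - apply Rinv_le_contravar; lra.
Qed.

Definition peqb (y z : nat * nat) : bool := Nat.eqb (fst y) (fst z) && Nat.eqb (snd y) (snd z).

Lemma peqb_true y z : peqb y z = true <-> y = z.
Proof. destruct y, z; unfold peqb; simpl. rewrite Bool.andb_true_iff, !Nat.eqb_eq.
  split; [intros [-> ->]; auto|intros H; inversion H; auto]. Qed.

Lemma lsum_nonneg {A} (f : A -> R) l : (forall x, In x l -> 0 <= f x) -> 0 <= lsum f l.
Proof. induction l; simpl; intros H; [lra|].
  pose proof (H a (or_introl eq_refl)). pose proof (IHl (fun x Hx => H x (or_intror Hx))). lra. Qed.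

Lemma lsum_plus {A} (f g : A -> R) l : lsum (fun x => f x + g x) l = lsum f l + lsum g l.
Proof. induction l; simpl; [ring|]. rewrite IHl; ring. Qed.

Lemma lsum_ext {A} (f g : A -> R) l : (forall x, f x = g x) -> lsum f l = lsum g l.
Proof. intros H; induction l; simpl; [reflexivity|]. rewrite H, IHl; reflexivity. Qed.

Lemma pick (g : nat * nat -> R) z P : In z P -> (forall y, In y P -> 0 <= g y) ->
  g z <= lsum (fun y => if peqb z y then g y else 0) P.
Proof.
  induction P as [|y P IH]; simpl; [tauto|]. intros Hin Hg.
  assert (Hr : 0 <= lsum (fun y => if peqb z y then g y else 0) P).
  { apply lsum_nonneg. intros w Hw. destruct (peqb z w); [apply Hg; auto|lra]. }
  destruct Hin as [->|Hin].
  - assert (peqb z z = true) by (apply peqb_true; auto). rewrite H. lra.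
  - pose proof (IH Hin (fun w Hw => Hg w (or_intror Hw))).
    assert (0 <= if peqb z y then g y else 0) by (destruct (peqb z y); [apply Hg; auto|lra]).
    lra.
Qed.

Lemma group (f : nat -> R) (p : nat -> nat * nat) (g : nat * nat -> R) l P :
  (forall x, In x l -> f x <= g (p x) /\ In (p x) P) -> (forall y, In y P -> 0 <= g y) ->
  lsum f l <= lsum (fun y => g y * INR (length (filter (fun x => peqb (p x) y) l))) P.
Proof.
  induction l as [|x l IH]; intros Hl Hg.
  - simpl. apply lsum_nonneg. intros y _. simpl. lra.
  - rewrite (lsum_ext _ (fun y => (if peqb (p x) y then g y else 0) +
        g y * INR (length (filter (fun x0 => peqb (p x0) y) l)))).
    + rewrite lsum_plus. simpl lsum.
      destruct (Hl x (or_introl eq_refl)) as [H1 H2].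
      pose proof (pick g (p x) P H2 Hg).
      pose proof (IH (fun w Hw => Hl w (or_intror Hw)) Hg). lra.
    + intros y. simpl filter. destruct (peqb (p x) y); [|ring].
      cbn [length]. rewrite S_INR. ring.
Qed.

Lemma alg a m k i : (1 <= k)%nat -> (1 <= i)%nat -> (i <= k + m)%nat ->
  Bf a k i * INR (2 * (2 ^ (k + m - i) + 1)) <=
  8 * 2 ^ m / (ln 2 * ln 2) / (Rpower (INR i) a * Rpower (INR k) (2 - a)).
Proof.
  intros Hk Hi Him. unfold Bf. pose proof ln2_pos.
  assert (Hip : 0 < INR i) by (apply lt_0_INR; lia).
  assert (Hkp : 0 < INR k) by (apply lt_0_INR; lia).
  rewrite <- (Rpower_mult_distr (INR i)), <- (Rpower_mult_distr (INR k)) by lra.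
  rewrite mult_INR, plus_INR, INR_pow2.
  assert (L12 : Rpower (ln 2) a * Rpower (ln 2) (2 - a) = ln 2 * ln 2).
  { rewrite <- Rpower_plus. replace (a + (2 - a)) with (INR 2) by (simpl; ring).
    rewrite Rpower_pow by lra. simpl; ring. }
  assert (ZA : 2 ^ (k + m - i) * 2 ^ i = 2 ^ k * 2 ^ m).
  { rewrite <- !pow_add. f_equal. lia. }
  assert (AB : 2 ^ i <= 2 ^ k * 2 ^ m).
  { rewrite <- pow_add. apply Rle_pow; [lra|lia]. }
  set (A := 2 ^ i) in *. set (Bk := 2 ^ k) in *. set (Mm := 2 ^ m) in *. set (Z := 2 ^ (k + m - i)) in *.
  set (X := Rpower (INR i) a). set (Y := Rpower (INR k) (2 - a)).
  set (L1 := Rpower (ln 2) a) in *. set (L2 := Rpower (ln 2) (2 - a)) in *.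
  assert (0 < A) by (apply pow_lt; lra). assert (0 < Bk) by (apply pow_lt; lra).
  assert (0 < Mm) by (apply pow_lt; lra).
  assert (0 < X) by apply Rpower_pos. assert (0 < Y) by apply Rpower_pos.
  assert (0 < L1) by apply Rpower_pos. assert (0 < L2) by apply Rpower_pos.
  replace (2 ^ S i) with (2 * A) by (simpl; reflexivity).
  replace (/ (/ (2 * A) * Bk * (X * L1) * (Y * L2)) * (INR 2 * (Z + INR 1)))
    with ((4 * (Z * A + A)) * / (Bk * (X * Y) * (L1 * L2))) by (simpl; field; repeat split; lra).
  rewrite ZA, L12.
  replace (8 * Mm / (ln 2 * ln 2) / (X * Y)) with ((8 * (Bk * Mm)) * / (Bk * (X * Y) * (ln 2 * ln 2)))
    by (field; repeat split; lra).
  apply Rmult_le_compat_r; [left; apply Rinv_0_lt_compat; repeat apply Rmult_lt_0_compat; lra|].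
  nra.
Qed.

Lemma per_k a m k : 0 < a -> a < 1 -> (1 <= k)%nat ->
  lsum (fun i => 8 * 2 ^ m / (ln 2 * ln 2) / (Rpower (INR i) a * Rpower (INR k) (2 - a))) (seq 1 (k + m))
  <= 8 * 2 ^ m / (ln 2 * ln 2) * (1 + INR m) / (1 - a) / INR k.
Proof.
  intros Ha0 Ha1 Hk. pose proof ln2_pos.
  set (D := 8 * 2 ^ m / (ln 2 * ln 2)).
  assert (HD : 0 < D) by (unfold D; apply Rdiv_lt_0_compat; [apply Rmult_lt_0_compat; [lra|apply pow_lt; lra]|nra]).
  set (Y := Rpower (INR k) (2 - a)). assert (0 < Y) by apply Rpower_pos.
  rewrite (lsum_ext _ (fun i => (D / Y) * / Rpower (INR i) a)).
  2: { intros i. assert (0 < Rpower (INR i) a) by apply Rpower_pos. field; lra. }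
  rewrite lsum_scal.
  pose proof (inner_sum a Ha0 Ha1 (k + m) ltac:(lia)) as Hin.
  assert (Hkp : 0 < INR k) by (apply lt_0_INR; lia).
  set (W := Rpower (INR k) (1 - a)). assert (0 < W) by apply Rpower_pos.
  assert (EY : Y = INR k * W).
  { unfold Y, W. replace (2 - a) with (1 + (1 - a)) by ring. rewrite Rpower_plus, Rpower_1 by lra. reflexivity. }
  assert (Hkm : Rpower (INR (k + m)) (1 - a) <= W * (1 + INR m)).
  { eapply Rle_trans.
    - apply Rle_Rpower_l with (b := INR k * (1 + INR m)); [lra|]. split.
      + apply lt_0_INR; lia.
      + rewrite plus_INR. assert (1 <= INR k) by (apply (le_INR 1); lia).
        assert (0 <= INR m) by apply pos_INR. nra.
    - rewrite <- Rpower_mult_distr by (try lra; pose proof (pos_INR m); lra). fold W.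
      apply Rmult_le_compat_l; [lra|].
      pose proof (pos_INR m).
      eapply Rle_trans. apply Rle_Rpower with (m := 1); lra.
      rewrite Rpower_1 by lra. lra. }
  assert (0 < D / Y) by (apply Rdiv_lt_0_compat; lra).
  eapply Rle_trans. apply Rmult_le_compat_l; [lra|exact Hin].
  rewrite EY.
  replace (D / (INR k * W) * (Rpower (INR (k + m)) (1 - a) / (1 - a))) with
     (Rpower (INR (k + m)) (1 - a) * (D / (INR k * W * (1 - a)))) by (field; repeat split; lra).
  replace (D * (1 + INR m) / (1 - a) / INR k) with (W * (1 + INR m) * (D / (INR k * W * (1 - a))))
    by (field; repeat split; lra).
  apply Rmult_le_compat_r; [left; apply Rdiv_lt_0_compat; [lra|]; repeat apply Rmult_lt_0_compat; lra|lra].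
Qed.

Lemma outer (E : R) K : 0 <= E -> (1 <= K)%nat ->
  lsum (fun k => E / INR k) (seq K (2 * K + 3)) <= 5 * E.
Proof.
  intros HE HK.
  assert (HKp : 1 <= INR K) by (apply (le_INR 1); lia).
  eapply Rle_trans. apply lsum_le with (g := fun _ => E / INR K).
  - intros k Hk. apply in_seq in Hk. unfold Rdiv. apply Rmult_le_compat_l; [lra|].
    apply Rinv_le_contravar; [lra|apply le_INR; lia].
  - rewrite lsum_const, length_seq. rewrite plus_INR, mult_INR. simpl.
    replace ((1 + 1) * INR K + (1 + 1 + 1)) with (INR K * (2 + 3 / INR K)) by (field; lra).
    assert (3 / INR K <= 3).
    { unfold Rdiv. assert (/ INR K <= 1) by (replace 1 with (/1) by field; apply Rinv_le_contravar; lra).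
      lra. }
    replace (INR K * (2 + 3 / INR K) * (E / INR K)) with ((2 + 3 / INR K) * E) by (field; lra).
    nra.
Qed.

Theorem lemma3 (alpha a : R) (Hba : badly_approximable alpha)
  (Ha0 : 0 < a) (Ha1 : a < 1) :
  exists C : R, 0 < C /\
    forall q : nat, (2 <= q)%nat ->
      sum_f q (q ^ 3) (lemma3_term alpha a) <= C.
Proof.
  destruct Hba as [c [Hc Hq]].
  destruct (exists_m c Hc) as [m Hm].
  assert (HB : forall q, (1 <= q)%nat -> / 2 ^ m <= INR q * dnint (INR q * alpha)).
  { intros q0 H0. eapply Rle_trans; [apply Hm|]. apply Hq; auto. }
  pose proof ln2_pos.
  set (D := 8 * 2 ^ m / (ln 2 * ln 2)).
  assert (HD : 0 < D) by (unfold D; apply Rdiv_lt_0_compat; [apply Rmult_lt_0_compat; [lra|apply pow_lt; lra]|nra]).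
  set (E := D * (1 + INR m) / (1 - a)).
  assert (HE : 0 < E).
  { unfold E. pose proof (pos_INR m). apply Rdiv_lt_0_compat; [nra|lra]. }
  exists (5 * E). split; [lra|].
  intros q Hq2.
  set (K := Nat.log2 q).
  pose proof (Nat.log2_spec q ltac:(lia)) as [Q1 Q2]. fold K in Q1, Q2.
  assert (HK : (1 <= K)%nat) by (apply Nat.log2_pos; lia).
  assert (Hq3 : (q <= q ^ 3)%nat) by (simpl; nia).
  assert (Hq3' : (q ^ 3 < 2 ^ (3 * (S K)))%nat).
  { replace (3 * S K)%nat with (S K * 3)%nat by lia. rewrite Nat.pow_mul_r.
    apply Nat.pow_lt_mono_l; lia. }
  unfold sum_f. rewrite lsum_sum_f_R0.
  set (l := seq q (S (q ^ 3 - q))).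
  set (P := flat_map (fun k => map (fun i => (k, i)) (seq 1 (k + m))) (seq K (2 * K + 3))).
  set (p := fun x => (Nat.log2 x, lev alpha x)).
  assert (Hl : forall x, In x l -> (q <= x <= q ^ 3)%nat).
  { intros x Hx. unfold l in Hx. apply in_seq in Hx. lia. }
  eapply Rle_trans.
  { apply group with (p := p) (P := P) (g := fun y => Bf a (fst y) (snd y)).
    - intros x Hx. destruct (Hl x Hx) as [Hx1 Hx2].
      destruct (term_bound alpha a m x HB Ha0 Ha1 ltac:(lia)) as [_ Tb].
      split; [exact Tb|].
      destruct (xfacts alpha m x HB ltac:(lia)) as [_ [_ [_ [Hi1 Hi2]]]].
      unfold P, p. apply in_flat_map. exists (Nat.log2 x). split.
      + apply in_seq. split.
        * apply Nat.log2_le_mono; lia.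
        * assert (Nat.log2 x < 3 * S K)%nat.
          { apply Nat.log2_lt_pow2; lia. }
          lia.
      + apply in_map. apply in_seq. lia.
    - intros y _. unfold Bf. left. apply Rinv_0_lt_compat.
      pose proof (Rpower_pos (INR (snd y) * ln 2) a).
      pose proof (Rpower_pos (INR (fst y) * ln 2) (2 - a)).
      assert (0 < / 2 ^ S (snd y)) by (apply Rinv_0_lt_compat, pow_lt; lra).
      assert (0 < 2 ^ fst y) by (apply pow_lt; lra).
      repeat apply Rmult_lt_0_compat; lra. }
  eapply Rle_trans.
  { apply lsum_le with (g := fun y => D / (Rpower (INR (snd y)) a * Rpower (INR (fst y)) (2 - a))).
    intros [k i] Hy. unfold P in Hy. apply in_flat_map in Hy as [k' [Hk' Hy]].
    apply in_map_iff in Hy as [i' [Hy Hi']]. inversion Hy; subst k' i'. clear Hy.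
    apply in_seq in Hk', Hi'. simpl fst; simpl snd.
    set (F := filter (fun x => peqb (p x) (k, i)) l).
    assert (HF : (length F <= 2 * (2 ^ (k + m - i) + 1))%nat).
    { apply count_bound with (alpha := alpha); [exact HB|lia| |].
      - apply NoDup_filter, seq_NoDup.
      - intros x Hx. apply filter_In in Hx as [Hx Hpx]. apply peqb_true in Hpx.
        unfold p in Hpx. inversion Hpx. destruct (Hl x Hx).
        pose proof (Nat.log2_spec x ltac:(lia)) as [X1 X2].
        destruct (xfacts alpha m x HB ltac:(lia)) as [_ [_ [Hd _]]]. auto. }
    eapply Rle_trans.
    - apply Rmult_le_compat_l.
      + unfold Bf. left. apply Rinv_0_lt_compat.
        pose proof (Rpower_pos (INR i * ln 2) a).
        pose proof (Rpower_pos (INR k * ln 2) (2 - a)).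
        assert (0 < / 2 ^ S i) by (apply Rinv_0_lt_compat, pow_lt; lra).
        assert (0 < 2 ^ k) by (apply pow_lt; lra).
        repeat apply Rmult_lt_0_compat; lra.
      + apply le_INR. exact HF.
    - apply alg; lia. }
  unfold P. rewrite lsum_flat_map.
  eapply Rle_trans.
  { apply lsum_le with (g := fun k => E / INR k).
    intros k Hk. apply in_seq in Hk. rewrite lsum_map. simpl.
    unfold E. apply per_k; auto; lia. }
  apply outer; lia || lra.
Qed.
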